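(* Let $\mathcal{G}^{\mathbb{c}}=(\mathbb{C},\mathbb{E}^{\mathbb{c}})$ be a C-DMG and let $\mathbb{C}_\mathbb{X},\mathbb{C}_\mathbb{Y},\mathbb{C}_\mathbb{W}$ be pairwise disjoint subsets of $\mathbb{C}$; for a compatible ADMG write $\mathbb{X}=\bigcup_{C\in\mathbb{C}_\mathbb{X}}C$, $\mathbb{Y}=\bigcup_{C\in\mathbb{C}_\mathbb{Y}}C$, $\mathbb{W}=\bigcup_{C\in\mathbb{C}_\mathbb{W}}C$. Assume that either (i) the sizes of the clusters are unknown (so compatible ADMGs may have clusters of any nonempty sizes), or (ii) every cluster contains more than one variable. If $\mathbb{C}_\mathbb{X}$ and $\mathbb{C}_\mathbb{Y}$ are not d-separated by $\mathbb{C}_\mathbb{W}$ in $\mathcal{G}^{\mathbb{c}}$, then there exists an ADMG $\mathcal{G}=(\mathbb{V},\mathbb{E})$ compatible with $\mathcal{G}^{\mathbb{c}}$ (with clusters as in (i) or (ii)) in which $\mathbb{X}$ and $\mathbb{Y}$ are not d-separated by $\mathbb{W}$.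
   Context: An ADMG $\mathcal{G}=(\mathbb{V},\mathbb{E})$ is a graph on a finite vertex set $\mathbb{V}$ whose edges are directed edges $X\rightarrow Y$ and bidirected edges $X\leftrightarrow Y$, such that the directed edges form no directed cycle. A C-DMG $\mathcal{G}^{\mathbb{c}}=(\mathbb{C},\mathbb{E}^{\mathbb{c}})$ compatible with an ADMG $\mathcal{G}=(\mathbb{V},\mathbb{E})$ is the graph whose vertex set $\mathbb{C}=\{C_1,\dots,C_k\}$ is a partition of $\mathbb{V}$ (each vertex $C_i$ is a cluster of variables) and in which, for all $C_i,C_j\in\mathbb{C}$ (possibly $i=j$), $C_i\rightarrow C_j$ (resp. $C_i\leftrightarrow C_j$) is an edge iff there exist $X\in C_i$, $Y\in C_j$ with $X\rightarrow Y$ (resp. $X\leftrightarrow Y$) in $\mathbb{E}$; an ADMG is compatible with a C-DMG if the C-DMG arises from it in this way. A C-DMG may contain directed cycles and self-loops. In a graph $\mathcal{G}^*$ (ADMG or C-DMG), $\mathrm{De}(V)$ denotes the descendants of $V$ (including $V$ itself). A walk $\langle V_1,\dots,V_n\rangle$ is blocked by a set $\mathbb{W}^*$ if (1) $V_1\in\mathbb{W}^*$ or $V_n\in\mathbb{W}^*$; or (2) for some $1<i<n$, the walk contains $V_{i-1}\,*\!-\!*\,V_i\rightarrow V_{i+1}$ or $V_{i-1}\leftarrow V_i\,*\!-\!*\,V_{i+1}$ (any edge type for $*\!-\!*$) and $V_i\in\mathbb{W}^*$; or (3) for some $1<i<n$, the walk contains $V_{i-1}\,*\!\!\rightarrow V_i\leftarrow\!\!*\,V_{i+1}$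 (each edge directed into $V_i$ or bidirected) and $\mathrm{De}(V_i)\cap\mathbb{W}^*=\emptyset$. A walk that is not blocked is active. A path is a walk with no repeated vertex. $\mathbb{W}^*$ d-separates disjoint sets $\mathbb{X}^*$ and $\mathbb{Y}^*$ if it blocks every path from a vertex of $\mathbb{X}^*$ to a vertex of $\mathbb{Y}^*$. *)

(* Defs.v *)
From mathcomp Require Import all_boot.
Set Implicit Arguments. Unset Strict Implicit. Unset Printing Implicit Defensive.

Record mgraph (T : finType) := MGraph { dir : rel T; bid : rel T }.

Definition is_admg (T : finType) (G : mgraph T) : Prop :=
  (forall x y, bid G x y = bid G y x) /\
  (forall x, ~~ bid G x x) /\
  (forall x y, dir G x y -> ~~ connect (dir G) y x).

(* Kind of the edge between consecutive walk vertices V_{i-1}, V_i: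
   Fwd : V_{i-1} -> V_i ;  Bwd : V_{i-1} <- V_i ;  Bi : V_{i-1} <-> V_i. *)
Inductive ekind := Fwd | Bwd | Bi.

Definition edge_ok (T : finType) (G : mgraph T) (k : ekind) (x y : T) : bool :=
  match k with Fwd => dir G x y | Bwd => dir G y x | Bi => bid G x y end.

(* A walk starting at x given by the list of (edge kind, next vertex). *)
Fixpoint walk_ok (T : finType) (G : mgraph T) (x : T) (s : seq (ekind * T)) : bool :=
  match s with
  | [::] => true
  | (k, y) :: s' => edge_ok G k x y && walk_ok G y s'
  end.

Definition walk_verts (T : finType) (x : T) (s : seq (ekind * T)) : seq T :=
  x :: map snd s.

Definition blocked (T : finType) (G : mgraph T) (W : {set T})
    (x : T) (s : seq (ekind * T)) : Prop :=
  let vs := walk_verts x s in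
  let ks := map fst s in
  (x \in W \/ last x (map snd s) \in W) \/
  exists i, 0 < i < size s /\
    let v := nth x vs i in
    let kb := nth Bi ks i.-1 in  (* edge between V_{i-1} and V_i *)
    let ka := nth Bi ks i in     (* edge between V_i and V_{i+1} *)
    (((ka = Fwd \/ kb = Bwd) /\ v \in W) \/
     ((kb = Fwd \/ kb = Bi) /\ (ka = Bwd \/ ka = Bi) /\
      (forall w, connect (dir G) v w -> w \notin W))).

(* W d-separates X and Y: every path (walk without repeated vertex)
   from a vertex of X to a vertex of Y is blocked by W. *)
Definition dsep (T : finType) (G : mgraph T) (W X Y : {set T}) : Prop :=
  forall (x : T) (s : seq (ekind * T)),
    x \in X -> walk_ok G x s -> uniq (walk_verts x s) ->
    last x (map snd s) \in Y -> blocked G W x s.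

(* cl : V -> C assigns each variable its cluster; clusters are the fibres. *)
Definition cluster (V C : finType) (cl : V -> C) (c : C) : {set V} :=
  [set v | cl v == c].

Definition clift (V C : finType) (cl : V -> C) (S : {set C}) : {set V} :=
  [set v | cl v \in S].

Definition compatible (V C : finType) (G : mgraph V) (GC : mgraph C)
    (cl : V -> C) : Prop :=
  is_admg G /\
  (forall c, exists v, cl v = c) /\
  (forall ci cj, dir GC ci cj <-> exists x y, [/\ cl x = ci, cl y = cj & dir G x y]) /\
  (forall ci cj, bid GC ci cj <-> exists x y, [/\ cl x = ci, cl y = cj & bid G x y]).

(* Size assumption: multi = false : case (i), cluster sizes unknown (any
   nonempty size); multi = true : case (ii), every cluster has > 1 variable. *)
Definition compatible_sized (multi : bool) (V C : finType) (G : mgraph V)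
    (GC : mgraph C) (cl : V -> C) : Prop :=
  compatible G GC cl /\ (multi -> forall c, 1 < #|cluster cl c|).

(* Main.v *)
Require Import Defs.
From mathcomp Require Import all_boot.
From mathcomp Require Import zify.
From Stdlib Require Import Classical.
Set Implicit Arguments. Unset Strict Implicit. Unset Printing Implicit Defensive.

Section Constr.
Variables (C : finType) (GC : mgraph C) (M : nat).
Definition VT := (C * 'I_M.+1)%type.
Definition Gdir : rel VT := fun u v => dir GC u.1 v.1 && (nat_of_ord u.2 < nat_of_ord v.2).
Definition Gbid : rel VT := fun u v => bid GC u.1 v.1 && (u != v).
Definition GG := MGraph Gdir Gbid.

Definition step (e : ekind) (t : nat) := match e with Fwd => t.+1 | Bwd => t.-1 | Bi => t end.
Fixpoint lift (t : nat) (s : seq (ekind * C)) : seq (ekind * VT) :=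
  match s with
  | [::] => [::]
  | (e, y) :: s' => (e, (y, inord (step e t) : 'I_M.+1)) :: lift (step e t) s'
  end.

Lemma lift_size t s : size (lift t s) = size s.
Proof. by elim: s t => [|[e y] s IH] t //=; rewrite IH. Qed.

Lemma lift_fst t s : map fst (lift t s) = map fst s.
Proof. by elim: s t => [|[e y] s IH] t //=; rewrite IH. Qed.

Lemma lift_cl t s : map fst (map snd (lift t s)) = map snd s.
Proof. by elim: s t => [|[e y] s IH] t //=; rewrite IH. Qed.

Lemma lift_time t s v : t + size s <= M -> v \in map snd (lift t s) ->
  nat_of_ord v.2 <= t + size s.
Proof.
elim: s t => [|[e y] s IH] t //= Hb; rewrite inE => /orP [/eqP -> /=|Hv].
  rewrite inordK; case: e => /=; lia.
have := IH (step e t); case: e Hb Hv => /= Hb Hv H; have := H _ Hv; lia.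
Qed.

Lemma lift_ok s x t : walk_ok GC x s -> uniq (x :: map snd s) -> size s <= t ->
  t + size s <= M -> walk_ok GG (x, inord t) (lift t s).
Proof.
elim: s x t => [|[e y] s IH] x t //= /andP [He Hw] /andP [Hx Hu] Hs Hb.
have Hxy : x != y by apply: contraNneq Hx => ->; rewrite inE eqxx.
apply/andP; split.
  case: e He => /= He; rewrite /Gdir /Gbid /= He /=.
  - rewrite !inordK; lia.
  - rewrite !inordK; lia.
  - by rewrite xpair_eqE negb_and Hxy.
by apply: IH => //; case: e {He} => /=; lia.
Qed.

Lemma desc_path p c t : path (dir GC) c p -> t + size p <= M ->
  connect Gdir (c, inord t) (last c p, inord (t + size p)).
Proof.
elim: p c t => [|d p IH] c t /=.
  by rewrite addn0.
move=> /andP [Hcd Hp] Hb.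
apply: (connect_trans (y := (d, inord t.+1))).
  apply: connect1; rewrite /Gdir /= Hcd /= !inordK; lia.
have := IH d t.+1 Hp; rewrite addSnnS; apply; lia.
Qed.

Lemma desc c w t : connect (dir GC) c w -> t + #|C| <= M.+1 ->
  exists t', connect Gdir (c, inord t) (w, t').
Proof.
move=> /connectP [p Hp ->] Hb.
case: (shortenP Hp) => p' Hp' Hu _.
have Hsz : size p' < #|C|.
  by move/card_uniqP: Hu => /= <-; apply: max_card.
eexists; apply: desc_path => //.
by rewrite -ltnS; apply: leq_trans Hb; rewrite -addnS leq_add2l.
Qed.

Lemma Gdir_mono u v : connect Gdir u v -> nat_of_ord u.2 <= nat_of_ord v.2.
Proof.
move=> /connectP [p Hp ->]; elim: p u Hp => [|w p IH] u //= /andP [H1 H2].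
have := IH _ H2; move: H1; rewrite /Gdir => /andP [_] => a b; exact: leq_trans (ltnW a) b.
Qed.
End Constr.
Section Compat.
Variables (C : finType) (GC : mgraph C) (M : nat).
Hypothesis Hsym : forall x y, bid GC x y = bid GC y x.
Hypothesis HM : 0 < M.

Lemma GG_compat multi : compatible_sized multi (GG GC M) GC (@fst C 'I_M.+1).
Proof.
have Hne : (ord0 : 'I_M.+1) != ord_max by rewrite -val_eqE /= eq_sym -lt0n.
split; last first.
  move=> _ c.
  have Hs : [set (c, ord0); (c, ord_max)] \subset cluster (@fst C 'I_M.+1) c.
    by apply/subsetP => v; rewrite !inE => /orP [] /eqP -> /=.
  apply: leq_trans (subset_leq_card Hs).
  by rewrite cards2 xpair_eqE negb_and Hne orbT.
split; [|split; [|split]].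
- split; [|split].
  + by move=> u v; rewrite /= /Gbid Hsym eq_sym.
  + by move=> u; rewrite /= /Gbid eqxx andbF.
  + move=> u v /= Huv; apply/negP => /Gdir_mono H.
    by move: Huv => /andP [_ H']; rewrite leqNgt H' in H.
- by move=> c; exists (c, ord0).
- move=> ci cj; split.
    move=> H; exists (ci, ord0), (cj, ord_max); split => //.
    by rewrite /= /Gdir /= H.
  by move=> [u [v [<- <- /andP [H _]]]].
- move=> ci cj; split.
    move=> H; exists (ci, ord0), (cj, ord_max); split => //.
    by rewrite /= /Gbid /= H xpair_eqE negb_and Hne orbT.
  by move=> [u [v [<- <- /andP [H _]]]].
Qed.
End Compat.

Theorem theorem2 (C : finType) (GC : mgraph C) (CX CY CW : {set C}) (multi : bool)
  (HGC : exists (V : finType) (G : mgraph V) (cl : V -> C),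
           compatible_sized multi G GC cl)
  (HXY : [disjoint CX & CY]) (HXW : [disjoint CX & CW]) (HYW : [disjoint CY & CW])
  (Hnot : ~ dsep GC CW CX CY) :
  exists (V : finType) (G : mgraph V) (cl : V -> C),
    compatible_sized multi G GC cl /\
    ~ dsep G (clift cl CW) (clift cl CX) (clift cl CY).
Proof.
have Hsym : forall x y, bid GC x y = bid GC y x.
  case: HGC => V [G [cl [[[Hs _] [_ [_ Hb]]] _]]] x y.
  apply/idP/idP => /Hb [u [v [<- <- H]]]; apply/Hb; exists v, u; split => //; by rewrite Hs.
have [x [s [Hx Hw Hu Hy Hnb]]] : exists x s, [/\ x \in CX, walk_ok GC x s,
    uniq (walk_verts x s), last x (map snd s) \in CY & ~ blocked GC CW x s].
  apply: NNPP => Hn; apply: Hnot => x s Hx Hw Hu Hy; apply: NNPP => Hb.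
  by apply: Hn; exists x, s; split.
pose N := size s; pose M := N + N + #|C|.
have HM : 0 < M.
  have : 0 < #|C| by apply/card_gt0P; exists x.
  rewrite /M; lia.
exists (VT C M), (GG GC M), (@fst C 'I_M.+1); split; first exact: GG_compat.
move=> Hd; apply: Hnb.
have Hvs : map fst (walk_verts (x, inord N : 'I_M.+1) (lift M N s)) = walk_verts x s.
  by rewrite /walk_verts /= lift_cl.
have Hlast : (last (x, inord N : 'I_M.+1) (map snd (lift M N s))).1 = last x (map snd s).
  by rewrite -(last_map fst) lift_cl.
have Hsz : size (lift M N s) = size s by apply: lift_size.
have Hfst : map fst (lift M N s) = map fst s by apply: lift_fst.
have Hbl : blocked (GG GC M) (clift fst CW) (x, inord N) (lift M N s).
  apply: Hd.
  - by rewrite inE.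
  - by apply: lift_ok => //; rewrite /M /N; lia.
  - by apply: (map_uniq (f := fst)); rewrite Hvs.
  - by rewrite inE Hlast.
case: Hbl => [[H|H]|[i [Hi H]]].
- by left; left; move: H; rewrite inE.
- by left; right; move: H; rewrite inE Hlast.
right; exists i; split; first by rewrite -Hsz.
have Hi' : i < size s by move: Hi; rewrite Hsz => /andP [_].
have Hv : nth x (walk_verts x s) i =
    (nth (x, inord N) (walk_verts (x, inord N : 'I_M.+1) (lift M N s)) i).1.
  by rewrite -Hvs (nth_map (x, inord N)) // /walk_verts /= size_map Hsz ltnS ltnW.
move: H; cbv zeta; rewrite -Hfst Hv.
set v' := nth (x, inord N) _ i.
move=> [[Hk Hin]|[Hk1 [Hk2 Hdesc]]].
  by left; split => //; move: Hin; rewrite inE.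
right; split => //; split => //.
move=> w Hcw; apply/negP => HwW.
have Hvin : v' \in walk_verts (x, inord N : 'I_M.+1) (lift M N s).
  by apply: mem_nth; rewrite /walk_verts /= size_map Hsz ltnS ltnW.
have Ht : nat_of_ord v'.2 <= N + N.
  move: Hvin; rewrite /walk_verts inE => /orP [/eqP -> /=|Hin].
    rewrite inordK; rewrite /M; lia.
  have := lift_time (M := M) (t := N) (s := s) (v := v'); rewrite /M /N => HH.
  by apply: HH => //; lia.
have [t' Hc] := desc (t := v'.2) Hcw ltac:(apply: leqW; rewrite /M; exact: leq_add Ht (leqnn _)).
rewrite inord_val in Hc.
have Ev : (v'.1, v'.2) = v' by case: (v').
rewrite Ev in Hc.
by move: (Hdesc _ Hc); rewrite inE /= HwW.
Qed.
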